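(* Assume $\theta_i<1$ for all $i$ and $\theta_j>0$ for some $j$. Then the map $F:\Delta_n\to\Delta_n$, $F(x)=(I_n-\Theta)(I_n-W(x)^T\Theta)^{-1}\mathbf 1_n/n$, satisfies: (i) $F$ is differentiable on $\operatorname{int}\Delta_n$ and continuous on $\Delta_n$; (ii) its Jacobian is $\dfrac{\partial F}{\partial x}=(I_n-\Theta)(I_n-W(x)^T\Theta)^{-1}(I_n-C^T)\Theta(I_n-\Theta)^{-1}\mathrm{diag}(F(x))$; (iii) for every $x\in\Delta_n$ and every $i$, $\dfrac{1-\theta_i}{n}\le F_i(x)\le \dfrac{1+\zeta}{n}$, where $\zeta=n\theta_{\mathrm{ave}}-\theta_{\min}$.
   Context: Let $n\ge 2$, $\mathbf 1_n$ the all-ones vector, $I_n$ the identity matrix, $\Delta_n=\{x\in\mathbb R^n: x\ge 0,\ \mathbf 1_n^Tx=1\}$, $\operatorname{int}\Delta_n=\{x\in\mathbb R^n: x>0,\ \mathbf 1_n^Tx=1\}$. Let $C\in\mathbb R^{n\times n}$ be a nonnegative row-stochastic matrix with zero diagonal, $\theta\in[0,1]^n$, $\Theta=\mathrm{diag}(\theta)$, and for $x\in\mathbb R^n$, $W(x)=\mathrm{diag}(x)+(I_n-\mathrm{diag}(x))C$. Under the stated assumption on $\theta$, $I_n-W(x)^T\Theta$ is invertible for every $x\in\Delta_n$. Let $\theta_{\min}=\min_j\theta_j$ and $\theta_{\mathrm{ave}}=\frac1n\sum_{j=1}^n\theta_j$. *)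

(* Defs.v *)
From HB Require Import structures.
From mathcomp Require Import all_boot all_order all_algebra.
Set Implicit Arguments. Unset Strict Implicit. Unset Printing Implicit Defensive.
Import Order.TTheory GRing.Theory Num.Theory.
Local Open Scope ring_scope.

Section Defs.
Variables (R : realFieldType) (n : nat).

Definition diagc (v : 'cV[R]_n) : 'M[R]_n := diag_mx v^T.

Definition ones : 'cV[R]_n := const_mx 1.

Definition Wmat (C : 'M[R]_n) (x : 'cV[R]_n) : 'M[R]_n :=
  diagc x + (1%:M - diagc x) *m C.

Definition Fmap (C : 'M[R]_n) (theta : 'cV[R]_n) (x : 'cV[R]_n) : 'cV[R]_n :=
  (1%:M - diagc theta) *m invmx (1%:M - (Wmat C x)^T *m diagc theta)
    *m ((n%:R)^-1 *: ones).

Definition Jac (C : 'M[R]_n) (theta : 'cV[R]_n) (x : 'cV[R]_n) : 'M[R]_n :=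
  (1%:M - diagc theta) *m invmx (1%:M - (Wmat C x)^T *m diagc theta)
    *m (1%:M - C^T) *m diagc theta *m invmx (1%:M - diagc theta)
    *m diagc (Fmap C theta x).

Definition simplex (x : 'cV[R]_n) : Prop :=
  (forall i, 0 <= x i 0) /\ \sum_(i < n) x i 0 = 1.
Definition int_simplex (x : 'cV[R]_n) : Prop :=
  (forall i, 0 < x i 0) /\ \sum_(i < n) x i 0 = 1.

Definition vnorm (v : 'cV[R]_n) : R := \big[Num.max/0]_(i < n) `|v i 0|.

Definition continuous_on (D : 'cV[R]_n -> Prop) (f : 'cV[R]_n -> 'cV[R]_n) : Prop :=
  forall x, D x -> forall eps, 0 < eps ->
    exists2 delta, 0 < delta &
      forall y, D y -> vnorm (y - x) < delta -> vnorm (f y - f x) < eps.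

Definition frechet (f : 'cV[R]_n -> 'cV[R]_n) (x : 'cV[R]_n) (J : 'M[R]_n) : Prop :=
  forall eps, 0 < eps ->
    exists2 delta, 0 < delta &
      forall h, vnorm h < delta -> vnorm (f (x + h) - f x - J *m h) <= eps * vnorm h.

Definition differentiable_at (f : 'cV[R]_n -> 'cV[R]_n) (x : 'cV[R]_n) : Prop :=
  exists J, frechet f x J.

(* theta_min; the seed 1 is harmless since all theta_i <= 1 (and n >= 1) *)
Definition theta_min (theta : 'cV[R]_n) : R := \big[Num.min/1]_(i < n) theta i 0.
Definition theta_ave (theta : 'cV[R]_n) : R := (\sum_(i < n) theta i 0) / n%:R.
Definition zeta (theta : 'cV[R]_n) : R := n%:R * theta_ave theta - theta_min theta.

End Defs.

(* Main.v *)
Require Import Defs.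
From HB Require Import structures.
From mathcomp Require Import all_boot all_order all_algebra.
From mathcomp Require Import lra ring.
Set Implicit Arguments. Unset Strict Implicit. Unset Printing Implicit Defensive.
Import Order.TTheory GRing.Theory Num.Theory.
Local Open Scope ring_scope.

Section Aux.
Variables (R : realFieldType) (n : nat).
Implicit Types (A B : 'M[R]_n) (v w z : 'cV[R]_n).

Definition n1 v : R := \sum_(i < n) `|v i 0|.
Definition colb A (q : R) := forall j, \sum_(i < n) `|A i j| <= q.

Lemma n1_ge0 v : 0 <= n1 v.
Proof. by apply: sumr_ge0 => i _; apply: normr_ge0. Qed.

Lemma n1_mul A q v : colb A q -> n1 (A *m v) <= q * n1 v.
Proof.
move=> hA; rewrite /n1.
apply: (@le_trans _ _ (\sum_(i < n) \sum_(j < n) `|A i j| * `|v j 0|)).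
  apply: ler_sum => i _; rewrite mxE.
  apply: (le_trans (ler_norm_sum _ _ _)); apply: ler_sum => j _.
  by rewrite normrM.
rewrite exchange_big /= mulr_sumr; apply: ler_sum => j _.
by rewrite -mulr_suml; apply: ler_wpM2r; [apply: normr_ge0 | apply: hA].
Qed.

Lemma n1D v w : n1 (v + w) <= n1 v + n1 w.
Proof.
rewrite /n1 -big_split /=; apply: ler_sum => i _; rewrite mxE.
exact: ler_normD.
Qed.

Lemma keyK A q z w : q < 1 -> colb A q -> z = w + A *m z ->
  n1 z * (1 - q) <= n1 w.
Proof.
move=> hq hA hz.
have h1 : n1 z <= n1 w + q * n1 z.
  by rewrite {1}hz; apply: (le_trans (n1D _ _)); rewrite lerD2l n1_mul.
rewrite mulrBr mulr1; lra.
Qed.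

Lemma n1_eq0 z : n1 z = 0 -> z = 0.
Proof.
move=> h; apply/matrixP => i j; rewrite (ord1 j) mxE.
have := h; rewrite /n1 => /eqP; rewrite psumr_eq0; last by move=> k _; apply: normr_ge0.
by move/allP => /(_ i (mem_index_enum _)) /=; rewrite normr_eq0 => /eqP.
Qed.

Lemma unitK A q : q < 1 -> colb A q -> (1%:M - A) \in unitmx.
Proof.
move=> hq hA; rewrite -unitmx_tr unitmxE unitfE; apply/negP => /det0P [v hv0 hv].
have hz : v^T = 0 + A *m v^T.
  have := congr1 trmx hv; rewrite trmx_mul trmxK trmx0 mulmxBl mul1mx.
  by move=> /eqP; rewrite subr_eq0 => /eqP {1}->; rewrite add0r.
have hw : n1 (0 : 'cV[R]_n) = 0 by rewrite /n1 big1 // => i _; rewrite mxE normr0.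
have := keyK hq hA hz; rewrite hw => hle.
have h0 : n1 v^T = 0.
  have := n1_ge0 v^T; rewrite /n1 => hge.
  have : 0 < 1 - q by lra.
  move=> hp; apply/eqP; rewrite eq_le hge andbT.
  by rewrite -(pmulr_rle0 _ hp) mulrC hle.
move: hv0; have := n1_eq0 h0 => /(congr1 trmx); rewrite trmxK trmx0 => ->.
by rewrite eqxx.
Qed.


Lemma colb_le A a b : a <= b -> colb A a -> colb A b.
Proof. by move=> hab hA j; apply: le_trans (hA j) hab. Qed.

Lemma colb_mul A B a b : 0 <= a -> colb A a -> colb B b -> colb (A *m B) (a * b).
Proof.
move=> ha hA hB j.
apply: (@le_trans _ _ (\sum_(i < n) \sum_(k < n) `|A i k| * `|B k j|)).
  apply: ler_sum => i _; rewrite mxE.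
  apply: (le_trans (ler_norm_sum _ _ _)); apply: ler_sum => k _.
  by rewrite normrM.
rewrite exchange_big /=.
apply: (@le_trans _ _ (\sum_(k < n) a * `|B k j|)).
  apply: ler_sum => k _; rewrite -mulr_suml.
  by apply: ler_wpM2r; [apply: normr_ge0 | apply: hA].
by rewrite -mulr_sumr; apply: ler_wpM2l.
Qed.

Lemma colb_add A B a b : colb A a -> colb B b -> colb (A + B) (a + b).
Proof.
move=> hA hB j; apply: (@le_trans _ _ (\sum_(i < n) (`|A i j| + `|B i j|))).
  by apply: ler_sum => i _; rewrite mxE; apply: ler_normD.
by rewrite big_split /=; apply: lerD.
Qed.

Lemma colb_sub A B a b : colb A a -> colb B b -> colb (A - B) (a + b).
Proof.
move=> hA hB j; apply: (@le_trans _ _ (\sum_(i < n) (`|A i j| + `|B i j|))).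
  by apply: ler_sum => i _; rewrite !mxE; apply: ler_normB.
by rewrite big_split /=; apply: lerD.
Qed.

Lemma colb_diag (d : 'rV[R]_n) a : (forall j, `|d 0 j| <= a) -> colb (diag_mx d) a.
Proof.
move=> hd j; rewrite (bigD1 j) //= big1 => [|i hij]; last first.
  by rewrite mxE (negbTE hij) mulr0n normr0.
by rewrite addr0 mxE eqxx mulr1n.
Qed.

Lemma colb_one : colb (1%:M : 'M[R]_n) 1.
Proof.
rewrite -diag_const_mx; apply: colb_diag => j; by rewrite mxE normr1.
Qed.

Lemma vnorm_ge0 v : 0 <= vnorm v.
Proof. by rewrite /vnorm; elim/big_rec: _ => // i x _ hx; rewrite le_max hx orbT. Qed.

Lemma vnorm_ge v i : `|v i 0| <= vnorm v.
Proof. by rewrite /vnorm; apply: (le_bigmax (0 : R) (fun i => `|v i 0|) i). Qed.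

Lemma vnorm_le v : vnorm v <= n1 v.
Proof.
rewrite /vnorm; apply: bigmax_le; first exact: n1_ge0.
move=> i _; rewrite /n1 (bigD1 i) //= lerDl; apply: sumr_ge0 => k _; exact: normr_ge0.
Qed.

End Aux.

Section Model.
Variables (R : realFieldType) (n : nat) (C : 'M[R]_n) (theta : 'cV[R]_n).
Hypotheses (hC0 : forall i j, 0 <= C i j) (hCs : forall i, \sum_(j < n) C i j = 1)
  (hCd : forall i, C i i = 0) (hth : forall i, 0 <= theta i 0 <= 1)
  (hth1 : forall i, theta i 0 < 1).

Definition Am (x : 'cV[R]_n) := (Wmat C x)^T *m diagc theta.
Definition Em (h : 'cV[R]_n) := (1%:M - C^T) *m diagc h *m diagc theta.
Definition uu : 'cV[R]_n := (n%:R)^-1 *: ones R n.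
Definition qq : R := \big[Num.max/0]_(i < n) theta i 0.
Definition VV x := invmx (1%:M - Am x) *m uu.

Lemma qq_ge j : theta j 0 <= qq.
Proof. by apply: (le_bigmax (0 : R) (fun i => theta i 0) j). Qed.

Lemma qq_lt1 : qq < 1.
Proof. by rewrite /qq; elim/big_rec: _ => // i x _ hx; rewrite gt_max hx hth1. Qed.

Lemma qq_ge0 : 0 <= qq.
Proof. by rewrite /qq; elim/big_rec: _ => // i x _ hx; rewrite le_max hx orbT. Qed.

Lemma WE x i j : Wmat C x i j = (i == j)%:R * x i 0 + (1 - x i 0) * C i j.
Proof.
rewrite /Wmat /diagc mulmxBl mul1mx mul_diag_mx !mxE.
rewrite mulrBl; congr (_ + _); last by rewrite mul1r.
by rewrite mulr_natl.
Qed.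

Lemma AmE x i j : Am x i j = Wmat C x j i * theta j 0.
Proof. by rewrite /Am /diagc mul_mx_diag !mxE. Qed.

Lemma Am_add x h : Am (x + h) = Am x + Em h.
Proof.
apply/matrixP => i j; rewrite [RHS]mxE !AmE !WE /Em /diagc !mul_mx_diag !mxE.
rewrite [(i == j)]eq_sym.
ring.
Qed.

Lemma colb_CT : colb C^T 1.
Proof.
move=> j; rewrite -(hCs j) (eq_bigr (fun i => C j i)) // => i _.
by rewrite mxE ger0_norm.
Qed.

Lemma colb_E h : colb (Em h) (2 * vnorm h).
Proof.
rewrite -[2 * vnorm h]mulr1; apply: colb_mul.
- by rewrite mulr_ge0 // vnorm_ge0.
- apply: colb_mul => //.
  + have -> : (2 : R) = 1 + 1 by [].
    apply: colb_sub; [exact: colb_one | exact: colb_CT].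
  + by apply: colb_diag => j; rewrite mxE vnorm_ge.
- apply: colb_diag => j; rewrite mxE ger0_norm; by case/andP: (hth j).
Qed.

Lemma colb_A (x : 'cV[R]_n) : (forall i, 0 <= x i 0 <= 1) -> colb (Am x) qq.
Proof.
move=> hx j.
apply: (@le_trans _ _ (theta j 0)); last exact: qq_ge.
have -> : theta j 0 = \sum_(i < n) Wmat C x j i * theta j 0.
  rewrite -mulr_suml.
  under eq_bigr do rewrite WE.
  rewrite big_split /= -mulr_sumr hCs -big_distrl /= (bigD1 j) //= big1.
    by rewrite eqxx addr0 mul1r mulr1 addrC subrK mul1r.
  by move=> i hij; rewrite eq_sym (negbTE hij).
rewrite le_eqVlt; apply/orP; left; apply/eqP; apply: eq_bigr => i _; rewrite AmE ger0_norm //.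
case/andP: (hx j) => h0 h1; case/andP: (hth j) => t0 t1.
rewrite WE mulr_ge0 // addr_ge0 // mulr_ge0 //; last by rewrite subr_ge0.
Qed.


Lemma solveK (A : 'M[R]_n) (w : 'cV[R]_n) : (1%:M - A) \in unitmx ->
  invmx (1%:M - A) *m w = w + A *m (invmx (1%:M - A) *m w).
Proof.
move=> hu; set z := invmx _ *m w.
have := mulKVmx hu w; rewrite -/z mulmxBl mul1mx => <-.
by rewrite subrK.
Qed.

Lemma diag_swap (a b : 'cV[R]_n) : diagc a *m b = diagc b *m a.
Proof. by apply/matrixP => i j; rewrite /diagc !mul_diag_mx !mxE (ord1 j) mulrC. Qed.

Lemma Fmap_V x : Fmap C theta x = (1%:M - diagc theta) *m VV x.
Proof. by rewrite /Fmap /VV mulmxA. Qed.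

Lemma unitT : (1%:M - diagc theta) \in unitmx.
Proof.
apply: (@unitK _ _ _ qq qq_lt1); apply: colb_diag => j; rewrite mxE ger0_norm ?qq_ge //.
by case/andP: (hth j).
Qed.

Lemma Jac_h x h : (1%:M - Am x) \in unitmx ->
  Jac C theta x *m h = (1%:M - diagc theta) *m (invmx (1%:M - Am x) *m (Em h *m VV x)).
Proof.
move=> hu.
rewrite /Jac -mulmxA diag_swap Fmap_V.
set T := 1%:M - diagc theta.
have hc : diagc h *m T = T *m diagc h.
  by rewrite /T mulmxBl mulmxBr mul1mx mulmx1 /diagc diag_mxC.
rewrite !mulmxA -[_ *m diagc h *m T]mulmxA hc mulmxA -[_ *m invmx T *m T]mulmxA.
rewrite (mulVmx unitT) mulmx1 -[_ *m diagc theta *m diagc h]mulmxA /diagc diag_mxC.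
by rewrite /Em /diagc /Am !mulmxA.
Qed.


Lemma zaux (V : zmodType) (a b u X Ab Eb : V) : a = u + X -> b = u + Ab ->
  a - b = Eb + (X - (Ab + Eb)).
Proof.
move=> -> ->; rewrite [u + X]addrC addrKA opprD addrCA [Eb + (- Ab + _)]addrCA subrr addr0.
by [].
Qed.

Lemma Vdiff (a b : 'cV[R]_n) x h : a = uu + Am (x + h) *m a -> b = uu + Am x *m b ->
  a - b = Em h *m b + Am (x + h) *m (a - b).
Proof.
move=> ha hb.
rewrite mulmxBr.
have -> : Am (x + h) *m b = Am x *m b + Em h *m b by rewrite Am_add mulmxDl.
exact: zaux ha hb.
Qed.

Lemma arith1 (a t K d r eps : R) : 0 < a -> 0 <= t -> t < a / 4 ->
  t * (16 * K + 1) <= eps * (a * a) -> 0 <= K -> 0 <= d -> 0 <= r ->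
  d * (1 - (1 - a + 2 * t)) <= 2 * t * K -> r * a <= 2 * t * d ->
  2 * r <= eps * t.
Proof.
move=> ha ht hta hte hK hd hr h1 h2.
have e1 : d * (1 - (1 - a + 2 * t)) = d * a - 2 * t * d by ring.
have hta' : 4 * t < a by lra.
have h3 : d * a <= 4 * t * K.
  have : 0 <= d * (a - 4 * t) by apply: mulr_ge0 => //; lra.
  nra.
have h4 : r * (a * a) <= 8 * t * t * K.
  have : r * a * a <= 2 * t * d * a by apply: ler_wpM2r => //; lra.
  have : 2 * t * (d * a) <= 2 * t * (4 * t * K) by apply: ler_wpM2l => //; lra.
  nra.
have haa : 0 < a * a by apply: mulr_gt0.
have h5 : 2 * r * (a * a) <= eps * t * (a * a).
  have : t * (t * (16 * K + 1)) <= t * (eps * (a * a)) by apply: ler_wpM2l.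
  have : 0 <= t * t by apply: mulr_ge0.
  nra.
by rewrite -(ler_pM2r haa).
Qed.


Lemma zaux2 (V : zmodType) (d e g X Y Z : V) : d = e + (X + Y) -> g = e + Z ->
  d - g = Y + (X - Z).
Proof.
move=> -> ->; rewrite [e + (X + Y)]addrC addrKA.
by rewrite [Y + _]addrCA addrA.
Qed.

Lemma colb_T : colb (1%:M - diagc theta) 2.
Proof.
have -> : (2 : R) = 1 + 1 by [].
apply: colb_sub; first exact: colb_one.
apply: colb_diag => j; rewrite mxE ger0_norm; by case/andP: (hth j).
Qed.

Lemma frechet_main (x : 'cV[R]_n) : (forall i, 0 <= x i 0 <= 1) -> frechet (Fmap C theta) x (Jac C theta x).
Proof.
move=> hx.
have hA := colb_A hx.
have hu := unitK qq_lt1 hA.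
have hv : VV x = uu + Am x *m VV x := solveK uu hu.
have ha : 0 < 1 - qq by rewrite subr_gt0 qq_lt1.
have hK : 0 <= n1 (VV x) by apply: n1_ge0.
move=> eps he.
exists (Num.min ((1 - qq) / 4) (eps * ((1 - qq) * (1 - qq)) / (16 * n1 (VV x) + 1))).
  rewrite lt_min; apply/andP; split; first by apply: divr_gt0.
  apply: divr_gt0; first by apply: mulr_gt0 => //; apply: mulr_gt0.
  by apply: ltr_wpDl => //; apply: mulr_ge0.
move=> h; rewrite lt_min => /andP [h1 h2].
have ht : 0 <= vnorm h by apply: vnorm_ge0.
have hA' : colb (Am (x + h)) (qq + 2 * vnorm h).
  by rewrite Am_add; apply: colb_add => //; exact: colb_E.
have hq' : qq + 2 * vnorm h < 1.
  have : vnorm h * 4 < 1 - qq by rewrite -ltr_pdivlMr.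
  by move=> hh; rewrite -subr_gt0; rewrite -subr_gt0 in hh; lra.
have hu' := unitK hq' hA'.
have hv' : VV (x + h) = uu + Am (x + h) *m VV (x + h) := solveK uu hu'.
have hJ := Jac_h h hu.
have hg := solveK (Em h *m VV x) hu.
have -> : Fmap C theta (x + h) - Fmap C theta x - Jac C theta x *m h =
  (1%:M - diagc theta) *m (VV (x + h) - VV x - invmx (1%:M - Am x) *m (Em h *m VV x)).
  by rewrite (Fmap_V (x + h)) (Fmap_V x) hJ !mulmxBr.
move: hv hv' hg hK h2.
move: (VV x) (VV (x + h)) (invmx (1%:M - Am x) *m (Em h *m VV x)) => b a g hv hv' hg hK h2.
have hd := Vdiff hv' hv.
have hr : a - b - g = Em h *m (a - b) + Am x *m (a - b - g).
  rewrite [Am x *m _]mulmxBr; apply: (zaux2 _ hg).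
  by rewrite {1}hd Am_add mulmxDl.
have k1 := keyK hq' hA' hd.
have k2 := keyK qq_lt1 hA hr.
have e1 := n1_mul b (colb_E h).
have e2 := n1_mul (a - b) (colb_E h).
have e3 := n1_mul (a - b - g) colb_T.
have e4 := vnorm_le ((1%:M - diagc theta) *m (a - b - g)).
have hd0 := n1_ge0 (a - b); have hr0 := n1_ge0 (a - b - g).
have h2' : vnorm h * (16 * n1 b + 1) <= eps * ((1 - qq) * (1 - qq)).
  rewrite ltr_pdivlMr in h2; first exact: ltW.
  by apply: ltr_wpDl => //; apply: mulr_ge0.
have hta : vnorm h < (1 - qq) / 4 by [].
have := @arith1 (1 - qq) (vnorm h) (n1 b) (n1 (a - b)) (n1 (a - b - g)) eps ha ht hta h2' hK hd0 hr0.
have -> : 1 - (1 - (1 - qq) + 2 * vnorm h) = 1 - (qq + 2 * vnorm h).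
  by lra.
move=> /(_ (le_trans k1 e1) (le_trans k2 e2)) hfin.
by apply: le_trans e4 _; apply: le_trans e3 _.
Qed.


Lemma contin_main : continuous_on (@simplex R n) (Fmap C theta).
Proof.
have hs : forall x : 'cV[R]_n, simplex x -> forall i, 0 <= x i 0 <= 1.
  move=> x [h0 h1] i; rewrite h0 /= -h1 (bigD1 i) //= lerDl.
  by apply: sumr_ge0 => k _.
move=> x hx eps he.
have hA := colb_A (hs x hx).
have hu := unitK qq_lt1 hA.
have hv : VV x = uu + Am x *m VV x := solveK uu hu.
have ha : 0 < 1 - qq by rewrite subr_gt0 qq_lt1.
have hK : 0 <= n1 (VV x) by apply: n1_ge0.
have hK1 : 0 < 4 * n1 (VV x) + 1 by apply: ltr_wpDl => //; apply: mulr_ge0.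
exists (eps * (1 - qq) / (4 * n1 (VV x) + 1)).
  by apply: divr_gt0 => //; apply: mulr_gt0.
move=> y hy h2.
have hB := colb_A (hs y hy).
have hu' := unitK qq_lt1 hB.
have hv' : VV y = uu + Am y *m VV y := solveK uu hu'.
have -> : Fmap C theta y - Fmap C theta x = (1%:M - diagc theta) *m (VV y - VV x).
  by rewrite (Fmap_V y) (Fmap_V x) mulmxBr.
have ht := vnorm_ge0 (y - x).
move: hv hv' hK hK1 h2; move: (VV x) (VV y) => b a hv hv' hK hK1 h2.
have hd : a - b = Em (y - x) *m b + Am y *m (a - b).
  have := @Vdiff a b x (y - x); rewrite [x + (y - x)]addrC subrK.
  by move=> /(_ hv' hv).
have k1 := keyK qq_lt1 hB hd.
have e1 := n1_mul b (colb_E (y - x)).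
have e3 := n1_mul (a - b) colb_T.
have e4 := vnorm_le ((1%:M - diagc theta) *m (a - b)).
have hd0 := n1_ge0 (a - b).
rewrite ltr_pdivlMr // in h2.
have k2 := le_trans k1 e1.
have : 2 * n1 (a - b) < eps.
  have : 2 * n1 (a - b) * (1 - qq) < eps * (1 - qq) by nra.
  by rewrite ltr_pM2r.
move=> hfin.
by apply: le_lt_trans e4 _; apply: le_lt_trans e3 _.
Qed.

Lemma pos_sol (A : 'M[R]_n) (z w : 'cV[R]_n) q : q < 1 ->
  (forall i j, 0 <= A i j) -> (forall j, \sum_(i < n) A i j <= q) ->
  (forall i, 0 <= w i 0) -> z = w + A *m z -> forall i, 0 <= z i 0.
Proof.
move=> hq hA hc hw hz.
pose p i := Num.max 0 (- z i 0).
have hp0 : forall i, 0 <= p i by move=> i; rewrite le_max lexx.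
have c1 : forall i, p i <= \sum_(j < n) A i j * p j.
  move=> i; have hs : 0 <= \sum_(j < n) A i j * p j.
    by apply: sumr_ge0 => j _; apply: mulr_ge0.
  rewrite /p ge_max hs /=.
  have -> : z i 0 = w i 0 + \sum_(j < n) A i j * z j 0.
    by rewrite {1}hz !mxE.
  rewrite opprD; apply: (@le_trans _ _ (- \sum_(j < n) A i j * z j 0)).
    by have := hw i; lra.
  rewrite -sumrN; apply: ler_sum => j _; rewrite -mulrN; apply: ler_wpM2l => //.
  by rewrite le_max lexx orbT.
have hS : \sum_(i < n) p i <= q * \sum_(i < n) p i.
  apply: (@le_trans _ _ (\sum_(i < n) \sum_(j < n) A i j * p j)).
    by apply: ler_sum => i _.
  rewrite exchange_big /= mulr_sumr; apply: ler_sum => j _.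
  by rewrite -mulr_suml; apply: ler_wpM2r.
have hS0 : 0 <= \sum_(i < n) p i by apply: sumr_ge0.
have hS1 : \sum_(i < n) p i <= 0 by nra.
move=> i; have : p i <= 0.
  apply: le_trans hS1; rewrite (bigD1 i) //= lerDl; by apply: sumr_ge0.
by rewrite /p ge_max lexx /= oppr_le0.
Qed.

Lemma Am_colsum (x : 'cV[R]_n) : (forall i, 0 <= x i 0 <= 1) ->
  forall j, \sum_(i < n) Am x i j = theta j 0.
Proof.
move=> hx j.
under eq_bigr do rewrite AmE.
rewrite -mulr_suml.
under eq_bigr do rewrite WE.
rewrite big_split /= -mulr_sumr hCs -big_distrl /= (bigD1 j) //= big1.
  by rewrite eqxx addr0 mul1r mulr1 addrC subrK mul1r.
by move=> i hij; rewrite eq_sym (negbTE hij).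
Qed.

Lemma Am_ge0 (x : 'cV[R]_n) : (forall i, 0 <= x i 0 <= 1) -> forall i j, 0 <= Am x i j.
Proof.
move=> hx i j; rewrite AmE.
case/andP: (hx j) => h0 h1; case/andP: (hth j) => t0 t1.
rewrite WE mulr_ge0 // addr_ge0 // mulr_ge0 //; last by rewrite subr_ge0.
Qed.


Lemma FE (x : 'cV[R]_n) i : Fmap C theta x i 0 = (1 - theta i 0) * VV x i 0.
Proof.
rewrite Fmap_V mulmxBl mul1mx /diagc mul_diag_mx !mxE; ring.
Qed.

Lemma bounds_main (x : 'cV[R]_n) : (0 < n)%N -> simplex x -> forall i,
  (1 - theta i 0) / n%:R <= Fmap C theta x i 0 <= (1 + zeta theta) / n%:R.
Proof.
move=> hn hx.
have hs : forall i, 0 <= x i 0 <= 1.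
  case: hx => h0 h1 i; rewrite h0 /= -h1 (bigD1 i) //= lerDl.
  by apply: sumr_ge0 => k _.
have hA := colb_A hs.
have hu := unitK qq_lt1 hA.
have hv : VV x = uu + Am x *m VV x := solveK uu hu.
have hN : 0 < n%:R :> R by rewrite ltr0n.
have huE : forall i, uu i 0 = n%:R^-1 by move=> i; rewrite !mxE mulr1.
have hcs := Am_colsum hs.
have hA0 := Am_ge0 hs.
have hF : forall i, Fmap C theta x i 0 = (1 - theta i 0) * VV x i 0 by move=> i; apply: FE.
move: hv hF; move: (VV x) => v hv hF.
have hv0 : forall i, 0 <= v i 0.
  apply: (pos_sol qq_lt1 hA0 _ _ hv).
    by move=> j; rewrite hcs qq_ge.
  by move=> i; rewrite huE invr_ge0 ltW.
have hvi : forall i, n%:R^-1 <= v i 0.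
  move=> i; rewrite {1}hv mxE huE mxE lerDl; apply: sumr_ge0 => j _.
  by apply: mulr_ge0.
have hlow : forall i, (1 - theta i 0) / n%:R <= Fmap C theta x i 0.
  move=> i; rewrite hF; apply: ler_wpM2l; last exact: hvi.
  by case/andP: (hth i) => _ ?; rewrite subr_ge0.
have hsum : \sum_(i < n) Fmap C theta x i 0 = 1.
  under eq_bigr do rewrite hF mulrBl mul1r.
  rewrite sumrB.
  have -> : \sum_(i < n) v i 0 = 1 + \sum_(j < n) theta j 0 * v j 0.
    rewrite {1}hv.
    under eq_bigr do rewrite mxE huE.
    rewrite big_split /= sumr_const card_ord -[_ *+ n]mulr_natl mulfV ?gt_eqF //.
    congr (_ + _); under eq_bigr do rewrite mxE.
    rewrite exchange_big /=; apply: eq_bigr => j _.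
    by rewrite -mulr_suml hcs.
  by rewrite addrK.
move=> i; rewrite hlow /=.
pose S := \sum_(k < n) theta k 0.
have hd : Fmap C theta x i 0 - (1 - theta i 0) / n%:R <=
    \sum_(k < n) (Fmap C theta x k 0 - (1 - theta k 0) / n%:R).
  rewrite (bigD1 i) //= lerDl; apply: sumr_ge0 => k _; rewrite subr_ge0; exact: hlow.
rewrite sumrB hsum -mulr_suml sumrB sumr_const card_ord in hd.
have hmin : theta_min theta <= theta i 0.
  by rewrite /theta_min; apply: (bigmin_le (1 : R) i (fun k => theta k 0)).
have hz : zeta theta = S - theta_min theta.
  by rewrite /zeta /theta_ave mulrC -mulrA mulVf ?gt_eqF // mulr1.
rewrite hz ler_pdivlMr //.
rewrite -/S in hd.
have hd' : Fmap C theta x i 0 * n%:R - (1 - theta i 0) <= n%:R - (n%:R - S).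
  have := ler_wpM2r (ltW hN) hd.
  have hN0 : n%:R != 0 :> R by rewrite gt_eqF.
  have -> : (Fmap C theta x i 0 - (1 - theta i 0) / n%:R) * n%:R =
    Fmap C theta x i 0 * n%:R - (1 - theta i 0) by rewrite mulrBl divfK.
  have -> : (1 - (n%:R - S) / n%:R) * n%:R = n%:R - (n%:R - S) by rewrite mulrBl mul1r divfK.
  by [].
lra.
Qed.

End Model.

Unset Implicit Arguments. Set Strict Implicit. Set Printing Implicit Defensive.

Theorem lemma2 (R : realFieldType) (n : nat) (C : 'M[R]_n) (theta : 'cV[R]_n) :
  (2 <= n)%N ->
  (forall i j, 0 <= C i j) ->
  (forall i, \sum_(j < n) C i j = 1) ->
  (forall i, C i i = 0) ->
  (forall i, 0 <= theta i 0 <= 1) ->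
  (forall i, theta i 0 < 1) ->
  (exists j, 0 < theta j 0) ->
  [/\ (forall x, int_simplex x -> differentiable_at (Fmap C theta) x),
      continuous_on (@simplex R n) (Fmap C theta),
      (forall x, int_simplex x -> frechet (Fmap C theta) x (Jac C theta x)) &
      (forall x, simplex x -> forall i,
         (1 - theta i 0) / n%:R <= Fmap C theta x i 0 <= (1 + zeta theta) / n%:R)].
Proof.
move=> hn hC0 hCs hCd hth hth1 _.
have hs : forall x : 'cV[R]_n, int_simplex x -> forall i, 0 <= x i 0 <= 1.
  move=> x [h0 h1] i; rewrite ltW //= -h1 (bigD1 i) //= lerDl.
  by apply: sumr_ge0 => k _; apply: ltW.
split.
- move=> x hx; exists (Jac C theta x); apply: frechet_main => //; exact: hs.
- exact: contin_main.
- move=> x hx; apply: frechet_main => //; exact: hs.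
- move=> x hx i; apply: bounds_main => //; exact: leq_trans hn.
Qed.
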